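(* Let $q$ be a prime power, $e\ge 2$, $r$ a positive integer, $a\in\mathbb{F}_{q^e}$ with $a\neq 0$, $f(x)=x^r(x^{q-1}+a)$, and $\ell=q^{e-1}+\cdots+q+1$. Suppose $(-a)^{\ell}\neq 1$ and $\gcd(r,q-1)=1$. (i) If $r\bmod\ell\in\{1,\ell-q\}$, then $f(x)$ permutes $\mathbb{F}_{q^e}$. (ii) If $e$ is odd and $r\bmod \ell\in\{q^{(e+1)/2}+1,\ \ell-q^{(e+1)/2}-q\}$, then $f(x)$ permutes $\mathbb{F}_{q^e}$.
   Context: $r\bmod\ell$ denotes the least nonnegative residue of $r$ modulo $\ell$. *)

(* Defs.v *)
From mathcomp Require Import all_boot all_algebra.
Set Implicit Arguments. Unset Strict Implicit. Unset Printing Implicit Defensive.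
Import GRing.Theory.
Local Open Scope ring_scope.

Definition fpoly (F : fieldType) (q r : nat) (a : F) (x : F) : F :=
  x ^+ r * (x ^+ q.-1 + a).

Definition ell (q e : nat) : nat := (\sum_(i < e) q ^ i)%N.

(* Main.v *)
Require Import Defs.
From mathcomp Require Import all_boot all_algebra all_field.
From mathcomp Require Import ring zify.
Set Implicit Arguments. Unset Strict Implicit. Unset Printing Implicit Defensive.
Import GRing.Theory.
Local Open Scope ring_scope.


Lemma c_one (F : fieldType) (c : F) r m : (0 < m)%N -> coprime r m ->
  c ^+ m = 1 -> c ^+ r = 1 -> c = 1.
Proof.
move=> m0 co cm cr.
have [u _ H] := Bezoutl r m0.
rewrite gcdnC (eqP co) in H.
case/dvdnP: H => b Hb.
have : c ^+ (1 + u * r) = c ^+ (b * m) by rewrite Hb.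
rewrite exprD expr1 mulnC exprM cr expr1n mulr1 mulnC exprM cm expr1n; done.
Qed.

Lemma cq (F : fieldType) (c : F) q j : (0 < q)%N -> c ^+ q.-1 = 1 -> c ^+ (q ^ j) = c.
Proof.
move=> q0 cq1; elim: j => [|j IH]; first by rewrite expn0 expr1.
by rewrite expnSr exprM IH -(prednK q0) exprS cq1 mulr1.
Qed.

Lemma frob (F : fieldType) p k j (u v : F) : p \in [pchar F] ->
  ((u + v) ^+ ((p ^ k) ^ j) = u ^+ ((p ^ k) ^ j) + v ^+ ((p ^ k) ^ j)) /\
  ((- v) ^+ ((p ^ k) ^ j) = - v ^+ ((p ^ k) ^ j)).
Proof.
move=> pc.
have H : pnat [pchar F] ((p ^ k) ^ j)%N.
  rewrite (eq_pnat _ (pcharf_eq pc)) -expnM pnatX pnat_id //.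
  exact: pcharf_prime pc.
by split; [apply: exprDn_pchar | apply: exprNn_pchar].
Qed.

Lemma proj (F : fieldType) q (T : F -> F) :
 (forall u v, T (u - v) = T u - T v) ->
 (forall z, T z = 0 -> z = 0) ->
 (forall c z, c ^+ q.-1 = 1 -> T (c * z) = c * T z) ->
 forall u v, v != 0 -> T u ^+ q.-1 = T v ^+ q.-1 -> exists2 c, c ^+ q.-1 = 1 & u = c * v.
Proof.
move=> HB Hk Hh u v v0 E.
have Tv : T v != 0 by apply: contra v0 => /eqP /Hk ->.
have c1 : (T u / T v) ^+ q.-1 = 1 by rewrite expr_div_n E divff // expf_neq0.
exists (T u / T v) => //.
apply/eqP; rewrite -subr_eq0; apply/eqP; apply: Hk.
by rewrite HB Hh // divfK // subrr.
Qed.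

Lemma crit (F : finFieldType) q r (a : F) L :
 (1 < q)%N -> (0 < r)%N -> coprime r q.-1 ->
 (forall x : F, x != 0 -> x ^+ (q.-1 * L) = 1) ->
 (- a) ^+ L != 1 ->
 (forall x y : F, x != 0 -> y != 0 ->
    fpoly q r a x ^+ q.-1 = fpoly q r a y ^+ q.-1 -> x ^+ q.-1 = y ^+ q.-1) ->
 bijective (fpoly q r a).
Proof.
move=> q1 r0 co HN Ha H; apply: injF_bij => x y.
have fz z : z != 0 -> fpoly q r a z != 0.
  move=> z0; rewrite /fpoly mulf_eq0 negb_or expf_neq0 //=.
  apply: contra Ha; rewrite addr_eq0 => /eqP h.
  by rewrite -h -exprM HN.
have f0 : fpoly q r a 0 = 0 by rewrite /fpoly -(prednK r0) exprS !mul0r.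
have [->|x0] := eqVneq x 0.
  rewrite f0 => /esym E; case: (eqVneq y 0) => // y0.
  by move: (fz y y0); rewrite E eqxx.
have [->|y0] := eqVneq y 0.
  by rewrite f0 => /eqP; rewrite (negbTE (fz _ x0)).
move=> E.
have Xq := H x y x0 y0 (congr1 (fun t => t ^+ q.-1) E).
have c1 : (x / y) ^+ q.-1 = 1 by rewrite expr_div_n Xq divff // expf_neq0.
have xc : x = (x / y) * y by rewrite divfK.
move: (x / y) c1 xc => c c1 xc.
have : c ^+ r * fpoly q r a y = 1 * fpoly q r a y.
  by rewrite mul1r -{2}E xc /fpoly !exprMn c1 mul1r mulrA.
move/(mulIf (fz _ y0)) => cr.
have q0 : (0 < q.-1)%N by rewrite ltn_predRL.
have := @c_one _ c r q.-1 q0 co c1 cr.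
by move=> c_1; rewrite xc c_1 mul1r.
Qed.

Definition TA (F : ringType) q j (a : F) (z : F) := z ^+ (q ^ j) + a * z.
Definition TB (F : ringType) q j (a : F) (z : F) := a * z ^+ (q ^ j) + z.

Arguments TA {F} q j a z.
Arguments TB {F} q j a z.

Section T.
Variable F : fieldType.

Lemma TA_add q j (a : F) :
  (forall u v : F, (u + v)^+(q^j) = u^+(q^j) + v^+(q^j)) ->
  (forall v : F, (-v)^+(q^j) = - v^+(q^j)) ->
  forall u v, TA q j a (u - v) = TA q j a u - TA q j a v.
Proof. move=> H1 H2 u v; rewrite /TA H1 H2; ring. Qed.

Lemma TB_add q j (a : F) :
  (forall u v : F, (u + v)^+(q^j) = u^+(q^j) + v^+(q^j)) ->
  (forall v : F, (-v)^+(q^j) = - v^+(q^j)) ->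
  forall u v, TB q j a (u - v) = TB q j a u - TB q j a v.
Proof. move=> H1 H2 u v; rewrite /TB H1 H2; ring. Qed.

Lemma TA_hom q j (a : F) : (0 < q)%N ->
  forall c z, c ^+ q.-1 = 1 -> TA q j a (c * z) = c * TA q j a z.
Proof. move=> q0 c z c1; rewrite /TA exprMn cq //; ring. Qed.

Lemma TB_hom q j (a : F) : (0 < q)%N ->
  forall c z, c ^+ q.-1 = 1 -> TB q j a (c * z) = c * TB q j a z.
Proof. move=> q0 c z c1; rewrite /TB exprMn cq //; ring. Qed.

Lemma TA_ker q j (a : F) L : (0 < q)%N ->
  (forall x : F, x != 0 -> x ^+ (q.-1 * L) = 1) -> (- a) ^+ L != 1 ->
  forall z, TA q j a z = 0 -> z = 0.
Proof.
move=> q0 HN Ha z; rewrite /TA => h; apply/eqP; apply: contraR Ha => z0.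
have e1 : z ^+ (q ^ j) = z * z ^+ (q ^ j).-1 by rewrite -exprS prednK // expn_gt0 q0.
have : z * (z ^+ (q ^ j).-1 + a) = 0 by rewrite mulrDr -e1 (mulrC z a) h.
move/eqP; rewrite mulf_eq0 (negbTE z0) /= addr_eq0 => /eqP h2.
by rewrite -h2 predn_exp -exprM -mulnA (mulnC _ L) mulnA exprM HN // expr1n.
Qed.

Lemma TB_ker q j (a : F) L : (0 < q)%N ->
  (forall x : F, x != 0 -> x ^+ (q.-1 * L) = 1) -> (- a) ^+ L != 1 ->
  forall z, TB q j a z = 0 -> z = 0.
Proof.
move=> q0 HN Ha z; rewrite /TB => h; apply/eqP; apply: contraR Ha => z0.
have e1 : z ^+ (q ^ j) = z * z ^+ (q ^ j).-1 by rewrite -exprS prednK // expn_gt0 q0.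
have : z * (a * z ^+ (q ^ j).-1 + 1) = 0 by rewrite -h e1; ring.
move/eqP; rewrite mulf_eq0 (negbTE z0) /= addr_eq0 => /eqP h2.
have h3 : (- a) * z ^+ (q ^ j).-1 = 1 by rewrite mulNr h2 opprK.
have := congr1 (fun t => t ^+ L) h3.
rewrite exprMn expr1n predn_exp -exprM -mulnA (mulnC _ L) mulnA exprM HN // expr1n mulr1.
by move=> ->.
Qed.

End T.

Section D.
Variable F : fieldType.

Lemma fpow q r (a x : F) :
  fpoly q r a x ^+ q.-1 = x ^+ (r * q.-1) * (x ^+ q.-1 + a) ^+ q.-1.
Proof. by rewrite /fpoly exprMn -exprM. Qed.

Lemma expred q r L (x : F) : x != 0 ->
  (forall x : F, x != 0 -> x ^+ (q.-1 * L) = 1) ->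
  x ^+ (r * q.-1) = x ^+ ((r %% L) * q.-1).
Proof.
move=> x0 HN.
rewrite {1}(divn_eq r L) mulnDl exprD -mulnA (mulnC L) mulnC exprM HN //.
by rewrite expr1n mul1r.
Qed.

Lemma idA q r L P (a x : F) : x != 0 ->
  (forall x : F, x != 0 -> x ^+ (q.-1 * L) = 1) -> (r %% L)%N = P ->
  fpoly q r a x ^+ q.-1 = (x ^+ P * (x ^+ q.-1 + a)) ^+ q.-1.
Proof. by move=> x0 HN h; rewrite fpow (@expred q r L x x0 HN) h exprMn exprM. Qed.

Lemma idB q r L Q (a x : F) : x != 0 ->
  (forall x : F, x != 0 -> x ^+ (q.-1 * L) = 1) -> (r %% L)%N = (L - Q)%N ->
  (Q <= L)%N ->
  fpoly q r a x ^+ q.-1 = (x^-1 ^+ Q * (x ^+ q.-1 + a)) ^+ q.-1.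
Proof.
move=> x0 HN h QL; rewrite fpow (@expred q r L x x0 HN) h exprMn; congr (_ * _).
have xQ : x ^+ (Q * q.-1) != 0 by rewrite expf_neq0.
apply: (mulIf xQ).
rewrite -exprD -mulnDl subnK // mulnC HN //.
by rewrite -exprM -exprMn mulVf // expr1n.
Qed.

Lemma TA1 q (a x w : F) : x ^+ q = x * w -> TA q 1 a x = x * (w + a).
Proof. by move=> e; rewrite /TA expn1 e; ring. Qed.

Lemma TAk q k (a x w : F) : (forall s : F, (s ^+ (q ^ k)) ^+ (q ^ k) = s ^+ q) ->
  x ^+ q = x * w -> TA q k a (x ^+ (q ^ k + 1)) = x ^+ (q ^ k + 1) * (w + a).
Proof.
move=> Hs e; rewrite /TA exprD expr1 exprMn Hs e; move: (x ^+ (q ^ k)) => X; ring.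
Qed.

Lemma TB1 q (a u w : F) : u = u ^+ q * w -> TB q 1 a u = u ^+ q * (w + a).
Proof. by move=> e; rewrite /TB expn1 {2}e; ring. Qed.

Lemma TBk q k (a u w : F) : (forall s : F, (s ^+ (q ^ k)) ^+ (q ^ k) = s ^+ q) ->
  u = u ^+ q * w -> TB q k a (u ^+ (q ^ k + 1)) = u ^+ (q ^ k + q) * (w + a).
Proof.
move=> Hs e; rewrite /TB !exprD expr1 exprMn Hs; move: (u ^+ q) (u ^+ (q ^ k)) e => A B ->; ring.
Qed.

Lemma recP q k L : (0 < q)%N ->
  (forall s : F, (s ^+ (q ^ k)) ^+ (q ^ k) = s ^+ q) -> odd L ->
  (forall x : F, x != 0 -> x ^+ (q.-1 * L) = 1) ->
  forall u v c : F, u != 0 -> v != 0 -> c ^+ q.-1 = 1 ->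
  u ^+ (q ^ k + 1) = c * v ^+ (q ^ k + 1) -> u ^+ q.-1 = v ^+ q.-1.
Proof.
move=> q0 Hs oL HN u v c u0 v0 c1 E.
have ut : u = (u / v) * v by rewrite divfK.
move: (u / v) ut => t ut.
have t0 : t != 0 by apply: contra u0 => /eqP t0; rewrite ut t0 mul0r.
have vP : v ^+ (q ^ k + 1) != 0 by rewrite expf_neq0.
have tP : t ^+ (q ^ k + 1) = c by apply: (mulIf vP); rewrite -exprMn -ut.
pose s := t ^+ q.-1.
have sE : s = t ^+ q.-1 by [].
clearbody s.
have s0 : s != 0 by rewrite sE expf_neq0.
have sP : s ^+ (q ^ k) * s = 1.
  by rewrite -exprSr -addn1 sE -exprM mulnC exprM tP c1.
have sq : s ^+ q = s.
  have := congr1 (fun z => z ^+ (q ^ k)) sP.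
  rewrite exprMn Hs expr1n -sP => h.
  by apply: (mulIf (expf_neq0 (q ^ k) s0)); rewrite h mulrC.
have s1 : s ^+ q.-1 = 1.
  apply: (mulfI s0); rewrite -exprS prednK // sq mulr1 //.
have s2 : s * s = 1 by rewrite -{1}(@cq _ s q k q0 s1) sP.
have sL : s ^+ L = 1 by rewrite sE -exprM HN.
have : s = 1.
  rewrite -sL -(odd_double_half L) oL -mul2n exprD expr1 exprM expr2 s2.
  by rewrite expr1n mulr1.
move=> ss; rewrite ut exprMn -sE ss mul1r //.
Qed.

Lemma case_gen q r (a : F) (T phi : F -> F) :
 (forall u v, T (u - v) = T u - T v) -> (forall z, T z = 0 -> z = 0) ->
 (forall c z, c ^+ q.-1 = 1 -> T (c * z) = c * T z) ->
 (forall x, x != 0 -> phi x != 0) ->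
 (forall x, x != 0 -> fpoly q r a x ^+ q.-1 = T (phi x) ^+ q.-1) ->
 (forall x y c, x != 0 -> y != 0 -> c ^+ q.-1 = 1 -> phi x = c * phi y ->
     x ^+ q.-1 = y ^+ q.-1) ->
 forall x y, x != 0 -> y != 0 ->
   fpoly q r a x ^+ q.-1 = fpoly q r a y ^+ q.-1 -> x ^+ q.-1 = y ^+ q.-1.
Proof.
move=> HB Hk Hh Hp Hid Hr x y x0 y0; rewrite !Hid // => E.
have [c c1 e] := @proj F q T HB Hk Hh (phi x) (phi y) (Hp y y0) E.
exact: Hr x y c x0 y0 c1 e.
Qed.

End D.

Lemma ellS q n : ell q n.+1 = (ell q n + q ^ n)%N.
Proof. by rewrite /ell big_ord_recr. Qed.

Lemma ell_ge q m d : (ell q m <= ell q (m + d))%N.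
Proof.
elim: d => [|d IH]; first by rewrite addn0.
by rewrite addnS ellS (leq_trans IH) // leq_addr.
Qed.

Lemma ell2 q : ell q 2 = (1 + q)%N.
Proof. by rewrite !ellS /ell big_ord0 expn0 expn1. Qed.

Lemma ell_odd q n : odd (ell q n) = (if odd q then odd n else (0 < n)%N).
Proof.
elim: n => [|n IH]; first by rewrite /ell big_ord0; case: (odd q).
rewrite ellS oddD oddX IH; case: (odd q); case: n {IH} => //= n.
by rewrite addbT.
Qed.

Lemma uq (F : fieldType) q (x : F) : (0 < q)%N -> x != 0 ->
  x^-1 = x^-1 ^+ q * x ^+ q.-1.
Proof.
move=> q0 x0.
have e : x^-1 ^+ q = x^-1 * x^-1 ^+ q.-1 by rewrite -exprS prednK.
by rewrite e -mulrA -exprMn mulVf // expr1n mulr1.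
Qed.

Lemma xq (F : fieldType) q (x : F) : (0 < q)%N -> x ^+ q = x * x ^+ q.-1.
Proof. by move=> q0; rewrite -exprS prednK. Qed.

Lemma inv_rec (F : fieldType) n (x y : F) : x^-1 ^+ n = y^-1 ^+ n -> x ^+ n = y ^+ n.
Proof. by rewrite !exprVn => /invr_inj. Qed.

Theorem corollary3p5 (F : finFieldType) (p k q e r : nat) (a : F) :
  prime p -> (0 < k)%N -> q = (p ^ k)%N ->
  #|F| = (q ^ e)%N ->
  (2 <= e)%N -> (0 < r)%N ->
  a != 0 ->
  (- a) ^+ ell q e != 1 ->
  div.coprime r q.-1 ->
  (((r %% ell q e)%N \in [:: 1%N; (ell q e - q)%N]) ->
     bijective (fpoly q r a)) /\
  (odd e ->
   ((r %% ell q e)%N \in [:: (q ^ (e.+1)./2 + 1)%N; (ell q e - q ^ (e.+1)./2 - q)%N]) ->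
     bijective (fpoly q r a)).
Proof.
move=> pp k0 qE cardF e2 r0 a0 Ha co.
have q1 : (1 < q)%N by rewrite qE -(exp1n k) ltn_exp2r // prime_gt1.
have q0 : (0 < q)%N by apply: ltnW.
have pc : p \in [pchar F].
  by apply: (@card_finPcharP _ p (k * e)) => //; rewrite cardF qE expnM.
have Hfr j (u v : F) : (u + v) ^+ (q ^ j) = u ^+ (q ^ j) + v ^+ (q ^ j).
  by rewrite qE; case: (@frob F p k j u v pc).
have Hng j (v : F) : (- v) ^+ (q ^ j) = - v ^+ (q ^ j).
  by rewrite qE; case: (@frob F p k j v v pc).
have HF (s : F) : s ^+ (q ^ e) = s by rewrite -cardF expf_card.
have HN (x : F) : x != 0 -> x ^+ (q.-1 * ell q e) = 1.
  move=> x0; rewrite /ell -predn_exp; apply: (mulfI x0).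
  by rewrite -exprS prednK ?expn_gt0 ?q0 // HF mulr1.
have L2 : (1 + q <= ell q e)%N.
  by rewrite -ell2 -(subnKC e2) ell_ge.
split.
  rewrite !inE => /orP [/eqP h | /eqP h].
    apply: (crit q1 r0 co HN Ha).
    apply: (case_gen (T := TA q 1 a) (phi := id)).
    - exact: TA_add.
    - exact: TA_ker q0 HN Ha.
    - exact: TA_hom.
    - by [].
    - move=> x x0; rewrite (idA (P := 1%N) a x0 HN h) (TA1 a (@xq _ _ x q0)) ?expr1 //.
    - by move=> x y c x0 y0 c1 /= ->; rewrite exprMn c1 mul1r.
  apply: (crit q1 r0 co HN Ha).
  apply: (case_gen (T := TB q 1 a) (phi := GRing.inv)).
  - exact: TB_add.
  - exact: TB_ker q0 HN Ha.
  - exact: TB_hom.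
  - by move=> x x0; rewrite invr_neq0.
  - move=> x x0; rewrite (idB (Q := q) a x0 HN h); last by apply: leq_trans L2; rewrite leq_addl.
    by rewrite (TB1 a (@uq _ _ x q0 x0)).
  - move=> x y c x0 y0 c1 e1; apply: inv_rec.
    by rewrite e1 exprMn c1 mul1r.
move=> oe.
set K := (e.+1)./2.
have hk : (K + K)%N = e.+1.
  by have := odd_double_half e.+1; rewrite /= oe /= add0n -addnn.
have e3 : (3 <= e)%N by move: e2 oe; case: e {hk K HF HN L2 cardF Ha} => [|[|[|e]]].
have Hs (s : F) : (s ^+ (q ^ K)) ^+ (q ^ K) = s ^+ q.
  by rewrite -exprM -expnD hk expnS mulnC exprM HF.
have oL : odd (ell q e) by rewrite ell_odd oe; case: (odd q) => //; lia.
have LK : (q ^ K + q <= ell q e)%N.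
  have -> : e = (K.+1 + (e - K.+1))%N by lia.
  apply: leq_trans (ell_ge _ _ _); rewrite ellS [X in (_ <= X)%N]addnC leq_add2l.
  have -> : K = (2 + (K - 2))%N by lia.
  by apply: leq_trans (ell_ge _ _ _); rewrite ell2 addnC leq_addr.
rewrite !inE => /orP [/eqP h | /eqP h].
  apply: (crit q1 r0 co HN Ha).
  apply: (case_gen (T := TA q K a) (phi := fun x => x ^+ (q ^ K + 1))).
  - exact: TA_add.
  - exact: TA_ker q0 HN Ha.
  - exact: TA_hom.
  - by move=> x x0; rewrite expf_neq0.
  - move=> x x0; by rewrite (idA a x0 HN h) (TAk a Hs (@xq _ _ x q0)).
  - move=> x y c x0 y0 c1 e1.
    exact: (recP q0 Hs oL HN x0 y0 c1 e1).
apply: (crit q1 r0 co HN Ha).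
apply: (case_gen (T := TB q K a) (phi := fun x => x^-1 ^+ (q ^ K + 1))).
- exact: TB_add.
- exact: TB_ker q0 HN Ha.
- exact: TB_hom.
- by move=> x x0; rewrite expf_neq0 // invr_neq0.
- move=> x x0; rewrite -subnDA in h.
  rewrite (idB (Q := (q ^ K + q)%N) a x0 HN h LK).
  by rewrite (TBk a Hs (@uq _ _ x q0 x0)).
- move=> x y c x0 y0 c1 e1; apply: inv_rec.
  by apply: (recP q0 Hs oL HN _ _ c1 e1); rewrite invr_neq0.
Qed.
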